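(* Let $m,n,N,\alpha\ge1$ be integers and let $\star\in\mathbf{Prod_+}(m,n;N)$ have rank $\alpha$. Then: (a) For all positive semidefinite $P\in\mathbb{C}^{m\times m}$ and $Q\in\mathbb{C}^{n\times n}$, $P\star Q\succcurlyeq0$. (b) Let $\mathcal Y(\star)=\sum_{k=1}^\alpha\mathcal Y_k$ be any decomposition with each $\mathcal Y_k$ positive semidefinite of rank one, write $\mathcal Y_k=(v_{i,k}v_{j,k}^* )_{i,j=1}^N$ with $v_{1,k},\dots,v_{N,k}\in\mathbb{C}^{mn}$, and let $\star_k$ be the product parameterized by $\mathcal Y_k$ (so $\star=\sum_k\star_k$). For every integer $\beta\ge1$ and all nonzero $A\in\mathbb{C}^{m\times\beta}$, $B\in\mathbb{C}^{n\times\beta}$, \[ AA^*\star BB^*\;\succcurlyeq\;\sum_{k=1}^\alpha\frac{1}{\min(\operatorname{rk}AA^*,\operatorname{rk}BB^*,\mathbf r(k))}\,\rho_k\rho_k^*\;\succcurlyeq\;0, \] where $\rho_k:=\big(\langle\mathrm{vec}(BA^T),v_{1,k}\rangle,\dots,\langle\mathrm{vec}(BA^T),v_{N,k}\rangle\big)^T\in\mathbb{C}^N$, $\mathcal U(k):=\operatorname{span}\{\mathrm{vec}^{-1}(v_{i,k}):i=1,\dots,N\}\subset\mathbb{C}^{n\times m}$ and $\mathbf r(k):=\max\{\operatorname{rk}X:X\in\mathcal U(k)\}$. In fact, for each $k$, $AA^*\star_kBB^*\succcurlyeq\frac{1}{\min(\operatorname{rk}AA^*,\operatorname{rk}BB^*,\mathbf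 r(k))}\rho_k\rho_k^*$. (c) For each fixed $k\in\{1,\dots,\alpha\}$ and each $\beta\ge1$, the coefficient $1/\min(\operatorname{rk}AA^*,\operatorname{rk}BB^*,\mathbf r(k))$ is best possible for $AA^*\star_kBB^*$: there exist nonzero $A\in\mathbb{C}^{m\times\beta}$, $B\in\mathbb{C}^{n\times\beta}$ and $u\in\mathbb{C}^N$ with $\rho_k^*u\ne0$ such that $u^*(AA^*\star_kBB^* )u=\frac{1}{\min(\operatorname{rk}AA^*,\operatorname{rk}BB^*,\mathbf r(k))}|\rho_k^*u|^2$; hence no larger constant works uniformly for all $A,B$.
   Context: Each $\mathbb{C}^{k_1\times k_2}$ carries the inner product $\langle A,B\rangle=\operatorname{tr}(AB^* )$; in particular on $\mathbb{C}^k$, $\langle x,y\rangle=y^*x$. Given $\mathcal{Y}=(Y_{ij})_{i,j=1}^N\in\mathbb{C}^{mnN\times mnN}$ with $Y_{ij}\in\mathbb{C}^{mn\times mn}$, the product $\star=\star(\mathcal Y):\mathbb{C}^{m\times m}\times\mathbb{C}^{n\times n}\to\mathbb{C}^{N\times N}$ is $A\star B:=(\operatorname{tr}((A\otimes B)Y_{ij}^* ))_{i,j=1}^N$ ($\otimes$ = Kronecker product). $\mathbf{Prod_+}(m,n;N)$ is the set of such products with $\mathcal Y$ positive semidefinite; the rank of $\star$ is $\operatorname{rk}\mathcal Y(\star)$. $\mathrm{vec}:\mathbb{C}^{n\times m}\to\mathbb{C}^{mn}$ stacks the columns of a matrix into a column vector, and $\mathrm{vec}^{-1}$ is its inverse.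 $X\succcurlyeq Y$ means $X-Y$ is positive semidefinite. *)

(* Defs.v *)
From HB Require Import structures.
From mathcomp Require Import all_boot all_order all_algebra.
Set Implicit Arguments. Unset Strict Implicit. Unset Printing Implicit Defensive.
Import Order.TTheory GRing.Theory Num.Theory.
Local Open Scope ring_scope.

(* Complex scalars: an arbitrary numClosedFieldType C (e.g. algC, or complex R). *)
Section Defs.
Variable C : numClosedFieldType.

Definition adj (p q : nat) (A : 'M[C]_(p, q)) : 'M[C]_(q, p) := (map_mx Num.conj A)^T.

Definition psd (p : nat) (A : 'M[C]_p) : Prop :=
  adj A = A /\ forall x : 'cV[C]_p, 0 <= (adj x *m A *m x) 0 0.

Definition loewner_ge (p : nat) (X Y : 'M[C]_p) : Prop := psd (X - Y).

(* Kronecker product; row/column index (i1,i2) is mxvec_index i1 i2 = i1*p2 + i2 *)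
Definition kron (p1 q1 p2 q2 : nat) (A : 'M[C]_(p1, q1)) (B : 'M[C]_(p2, q2))
  : 'M[C]_(p1 * p2, q1 * q2) :=
  \sum_(i1 < p1) \sum_(j1 < q1) \sum_(i2 < p2) \sum_(j2 < q2)
     (A i1 j1 * B i2 j2) *: delta_mx (mxvec_index i1 i2) (mxvec_index j1 j2).

(* vec : C^{n x m} -> C^{mn}, stacking columns: entry (i,j) goes to index j*n+i *)
Definition vec (n m : nat) (X : 'M[C]_(n, m)) : 'cV[C]_(m * n) := (mxvec X^T)^T.

Definition vec_inv (n m : nat) (v : 'cV[C]_(m * n)) : 'M[C]_(n, m) := (vec_mx v^T)^T.

Definition block (N k : nat) (Y : 'M[C]_(N * k)) (i j : 'I_N) : 'M[C]_k :=
  \matrix_(p, q) Y (mxvec_index i p) (mxvec_index j q).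

Definition starY (m n N : nat) (Y : 'M[C]_(N * (m * n)))
  (A : 'M[C]_m) (B : 'M[C]_n) : 'M[C]_N :=
  \matrix_(i, j) \tr (kron A B *m adj (block Y i j)).

Definition is_max_rank_span (N n m : nat) (S : 'I_N -> 'M[C]_(n, m)) (r : nat) : Prop :=
  (exists c : 'I_N -> C, \rank ((\sum_i c i *: S i)%R) = r) /\
  (forall c : 'I_N -> C, (\rank ((\sum_i c i *: S i)%R) <= r)%N).

Definition rho (m n N b : nat) (v : 'I_N -> 'cV[C]_(m * n))
  (A : 'M[C]_(m, b)) (B : 'M[C]_(n, b)) : 'cV[C]_N :=
  \col_i (adj (v i) *m vec (B *m A^T)) 0 0.

Definition coef (m n b : nat) (A : 'M[C]_(m, b)) (B : 'M[C]_(n, b)) (r : nat) : C :=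
  ((minn (\rank (A *m adj A)) (minn (\rank (B *m adj B)) r))%:R)^-1.

End Defs.

(* Main.v *)
Require Import Defs.
From HB Require Import structures.
From mathcomp Require Import all_boot all_order all_algebra.
From mathcomp Require Import ring.
Import Order.TTheory GRing.Theory Num.Theory.
Local Open Scope ring_scope.

Set Implicit Arguments. Unset Strict Implicit. Unset Printing Implicit Defensive.

Section Aux.
Variable C : numClosedFieldType.

Lemma hadjE p q (A : 'M[C]_(p, q)) i j : adj A i j = (A j i)^*.
Proof. by rewrite /adj !mxE. Qed.

Lemma hadjK p q (A : 'M[C]_(p, q)) : adj (adj A) = A.
Proof. by apply/matrixP=> i j; rewrite !hadjE conjCK. Qed.

Lemma hadjM p q r (A : 'M[C]_(p, q)) (B : 'M[C]_(q, r)) :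
  adj (A *m B) = adj B *m adj A.
Proof.
apply/matrixP=> i j; rewrite hadjE !mxE rmorph_sum; apply: eq_bigr => k _.
by rewrite !hadjE rmorphM mulrC.
Qed.

Lemma hadjD p q (A B : 'M[C]_(p, q)) : adj (A + B) = adj A + adj B.
Proof. by apply/matrixP=> i j; rewrite !(hadjE, mxE) rmorphD. Qed.

Lemma hadjN p q (A : 'M[C]_(p, q)) : adj (- A) = - adj A.
Proof. by apply/matrixP=> i j; rewrite !(hadjE, mxE) rmorphN. Qed.

Lemma hadjB p q (A B : 'M[C]_(p, q)) : adj (A - B) = adj A - adj B.
Proof. by rewrite hadjD hadjN. Qed.

Lemma hadjZ p q c (A : 'M[C]_(p, q)) : adj (c *: A) = c^* *: adj A.
Proof. by apply/matrixP=> i j; rewrite !(hadjE, mxE) rmorphM. Qed.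

Lemma hadj0 p q : adj (0 : 'M[C]_(p, q)) = 0.
Proof. by apply/matrixP=> i j; rewrite !(hadjE, mxE) rmorph0. Qed.

Lemma hadj_sum p q I (r : seq I) (P : pred I) (F : I -> 'M[C]_(p, q)) :
  adj (\sum_(i <- r | P i) F i) = \sum_(i <- r | P i) adj (F i).
Proof.
apply/matrixP=> i j; rewrite hadjE !summxE rmorph_sum; apply: eq_bigr => k _.
by rewrite hadjE.
Qed.

Lemma htr_adj p (A : 'M[C]_p) : \tr (adj A) = (\tr A)^*.
Proof. by rewrite /mxtrace rmorph_sum; apply: eq_bigr => i _; rewrite hadjE. Qed.

Lemma hadj_trmx p q (A : 'M[C]_(p, q)) : adj (A^T) = map_mx Num.conj A.
Proof. by apply/matrixP=> i j; rewrite hadjE !mxE. Qed.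

Lemma trace_adj_ge0 p q (X : 'M[C]_(p, q)) : 0 <= \tr (X *m adj X).
Proof.
rewrite /mxtrace; apply: sumr_ge0 => i _; rewrite mxE; apply: sumr_ge0 => j _.
by rewrite hadjE -normCK exprn_ge0.
Qed.

Lemma trace_adj_eq0 p q (X : 'M[C]_(p, q)) : \tr (X *m adj X) = 0 -> X = 0.
Proof.
rewrite /mxtrace => /eqP; rewrite psumr_eq0 => [/allP H|i _]; last first.
  by rewrite mxE; apply: sumr_ge0 => j _; rewrite hadjE -normCK exprn_ge0.
apply/matrixP=> i j; have /implyP/(_ isT)/eqP := H i (mem_index_enum _).
rewrite mxE => /eqP; rewrite psumr_eq0 => [/allP H2|k _]; last first.
  by rewrite hadjE -normCK exprn_ge0.
have /implyP/(_ isT) := H2 j (mem_index_enum _).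
by rewrite hadjE -normCK expf_eq0 /= normr_eq0 mxE => /eqP.
Qed.

End Aux.

Section Aux2.
Variable C : numClosedFieldType.

Lemma mxvec_index_eq m n (i i' : 'I_m) (j j' : 'I_n) :
  (mxvec_index i j == mxvec_index i' j') = (i == i') && (j == j').
Proof.
rewrite /mxvec_index; apply/eqP/andP => [|[/eqP-> /eqP->]//].
by move/cast_ord_inj/enum_rank_inj => [-> ->].
Qed.
Lemma kronE p1 q1 p2 q2 (A : 'M[C]_(p1, q1)) (B : 'M[C]_(p2, q2)) i1 i2 j1 j2 :
  kron A B (mxvec_index i1 i2) (mxvec_index j1 j2) = A i1 j1 * B i2 j2.
Proof.
rewrite /kron summxE.
under eq_bigr => a _ do (rewrite summxE; under eq_bigr => b _ do (rewrite summxE; under eq_bigr => c _ do rewrite summxE)).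
under eq_bigr do under eq_bigr do under eq_bigr do under eq_bigr do
  rewrite !mxE !mxvec_index_eq.
rewrite (bigD1 i1) //= [X in _ + X]big1 ?addr0 => [|k /negbTE nk]; last first.
  by rewrite big1 // => a _; rewrite big1 // => b _; rewrite big1 // => c _; rewrite (eq_sym _ k) nk /= mulr0.
rewrite (bigD1 j1) //= [X in _ + X]big1 ?addr0 => [|k /negbTE nk]; last first.
  by rewrite big1 // => b _; rewrite big1 // => c _; rewrite (eq_sym _ k) nk /= andbF mulr0.
rewrite (bigD1 i2) //= [X in _ + X]big1 ?addr0 => [|k /negbTE nk]; last first.
  by rewrite big1 // => c _; rewrite (eq_sym _ k) nk /= andbF mulr0.
rewrite (bigD1 j2) //= [X in _ + X]big1 ?addr0 => [|k /negbTE nk]; last first.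
  by rewrite (eq_sym _ k) nk /= !andbF mulr0.
by rewrite !eqxx /= mulr1.
Qed.

Lemma sum_mxvec m n (F : 'I_(m * n) -> C) :
  \sum_k F k = \sum_i \sum_j F (mxvec_index i j).
Proof.
rewrite pair_big /= (reindex (uncurry (@mxvec_index m n))) /=.
  by apply: eq_bigr => -[i j].
by apply: onW_bij; have [g h1 h2] := curry_mxvec_bij m n; exists g => x;
  [apply: h1 | apply: h2].
Qed.

Lemma vecE n m (X : 'M[C]_(n, m)) i j : vec X (mxvec_index j i) 0 = X i j.
Proof. by rewrite /vec mxE mxvecE mxE. Qed.

Lemma vec_invE n m (v : 'cV[C]_(m * n)) i j : vec_inv v i j = v (mxvec_index j i) 0.
Proof. by rewrite /vec_inv !mxE. Qed.

Lemma vec_invK n m (v : 'cV[C]_(m * n)) : vec (vec_inv v) = v.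
Proof.
apply/matrixP=> k z; rewrite ord1; case/mxvec_indexP: k => j i.
by rewrite vecE vec_invE.
Qed.

Lemma vec_inv_sum n m N (c : 'I_N -> C) (v : 'I_N -> 'cV[C]_(m * n)) :
  @vec_inv C n m (\sum_i c i *: v i) = \sum_i c i *: @vec_inv C n m (v i).
Proof.
apply/matrixP=> i j; rewrite vec_invE !summxE; apply: eq_bigr => k _.
by rewrite !mxE.
Qed.

Lemma kron_vec p1 q1 p2 q2 (F : 'M[C]_(p1, q1)) (G : 'M[C]_(p2, q2)) (X : 'M[C]_(q2, q1)) :
  kron F G *m vec X = vec (G *m X *m F^T).
Proof.
apply/matrixP=> k z; rewrite ord1; case/mxvec_indexP: k => i1 i2.
rewrite vecE !mxE sum_mxvec; apply: eq_bigr => j1 _.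
rewrite [in RHS]mxE mulr_suml. apply: eq_bigr => j2 _. rewrite (kronE F G i1 i2 j1 j2).
by rewrite vecE !mxE [RHS]mulrC mulrA.
Qed.

Lemma vec_dot n m (X Y : 'M[C]_(n, m)) :
  (adj (vec X) *m vec Y) 0 0 = \tr (Y *m adj X).
Proof.
rewrite mxE sum_mxvec /mxtrace exchange_big /=; apply: eq_bigr => i _.
rewrite mxE; apply: eq_bigr => j _.
by rewrite !hadjE !vecE mulrC.
Qed.

End Aux2.

Section Aux3.
Variable C : numClosedFieldType.

Lemma tr_rank1 p (K : 'M[C]_p) (a b : 'cV[C]_p) :
  \tr (K *m (a *m adj b)) = (adj b *m K *m a) 0 0.
Proof. by rewrite mulmxA mxtrace_mulC mulmxA /mxtrace big_ord1. Qed.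

Lemma quad_bilin p N (K : 'M[C]_p) (c : 'I_N -> C) (a : 'I_N -> 'cV[C]_p) :
  (adj (\sum_j c j *: a j) *m K *m (\sum_j c j *: a j)) 0 0 =
  \sum_i \sum_j (c i)^* * c j * (adj (a i) *m K *m a j) 0 0.
Proof.
rewrite hadj_sum mulmx_suml mulmx_suml summxE.
apply: eq_bigr => i _; rewrite mulmx_sumr summxE; apply: eq_bigr => j _.
by rewrite hadjZ -!scalemxAl -scalemxAr !mxE mulrA.
Qed.

Lemma starY_quad m n N T (Y : 'M[C]_(N * (m * n))) (L : 'I_T -> 'I_N -> 'cV[C]_(m * n))
   (P : 'M[C]_m) (Q : 'M[C]_n) (u : 'cV[C]_N) :
  (forall i j, block Y i j = \sum_t L t i *m adj (L t j)) ->
  (adj u *m starY Y P Q *m u) 0 0 =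
  \sum_t (adj (\sum_j u j 0 *: L t j) *m kron P Q *m (\sum_j u j 0 *: L t j)) 0 0.
Proof.
move=> HY.
have HS i j : starY Y P Q i j = \sum_t (adj (L t i) *m kron P Q *m L t j) 0 0.
  rewrite mxE HY hadj_sum mulmx_sumr raddf_sum; apply: eq_bigr => t _.
  by rewrite hadjM hadjK; exact: tr_rank1.
under eq_bigr do rewrite quad_bilin.
rewrite exchange_big /=; under eq_bigr do rewrite exchange_big /=.
rewrite exchange_big /= mxE; apply: eq_bigr => j _.
rewrite mxE mulr_suml; apply: eq_bigr => i _.
rewrite mxE HS !mulr_sumr mulr_suml; apply: eq_bigr => t _.
by rewrite [X in X * _ * _ = _]mxE -mulrA [X in _ * X = _]mulrC mulrA.
Qed.

Lemma tr_adjC p q (F : 'M[C]_(p, q)) : (adj F)^T = map_mx Num.conj F.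
Proof. by apply/matrixP=> i j; rewrite mxE hadjE mxE. Qed.

Lemma adj_conj p q (F : 'M[C]_(p, q)) : adj (map_mx Num.conj F) = F^T.
Proof. by apply/matrixP=> i j; rewrite hadjE !mxE conjCK. Qed.

Lemma quadK m n b1 b2 (F : 'M[C]_(m, b1)) (G : 'M[C]_(n, b2)) (w : 'cV[C]_(m * n)) :
  (adj w *m kron (F *m adj F) (G *m adj G) *m w) 0 0 =
  \tr ((adj G *m vec_inv w *m map_mx Num.conj F) *m
        adj (adj G *m vec_inv w *m map_mx Num.conj F)).
Proof.
rewrite -[X in _ *m X]vec_invK -mulmxA kron_vec -[X in adj X]vec_invK vec_dot.
rewrite !hadjM adj_conj hadjK trmx_mul tr_adjC.
rewrite -!mulmxA mxtrace_mulC -!mulmxA.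
done.
Qed.

Lemma rho_dot m n N b (v : 'I_N -> 'cV[C]_(m * n)) (A : 'M[C]_(m, b)) (B : 'M[C]_(n, b))
  (u : 'cV[C]_N) :
  (adj (rho v A B) *m u) 0 0 =
  \tr (adj B *m vec_inv (\sum_j u j 0 *: v j) *m map_mx Num.conj A).
Proof.
have -> : (adj (rho v A B) *m u) 0 0 =
   (adj (vec (B *m A^T)) *m (\sum_j u j 0 *: v j)) 0 0.
  rewrite mxE mulmx_sumr summxE; apply: eq_bigr => j _.
  rewrite -scalemxAr !mxE rmorph_sum mulrC; congr (_ * _).
  apply: eq_bigr => k _.
  by rewrite !hadjE rmorphM /= conjCK mulrC.
rewrite -[\sum_j _ *: v j](@vec_invK C n m) vec_dot hadjM hadj_trmx mulmxA mxtrace_mulC.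
by rewrite vec_invK mulmxA.
Qed.

End Aux3.

Section Aux4.
Variable C : numClosedFieldType.

Lemma tstar_adj p q (M : 'M[C]_(p, q)) : (M ^t* )%sesqui = adj M.
Proof. by apply/matrixP=> i j; rewrite hadjE !mxE. Qed.

Lemma rank_adj p q (X : 'M[C]_(p, q)) : \rank (X *m adj X) = \rank X.
Proof.
rewrite -[RHS](mxrank_mul_ker X (adj X)).
suff -> : (X :&: kermx (adj X))%MS = 0 by rewrite mxrank0 addn0.
apply/eqP; rewrite -submx0; apply/rV_subP => y.
rewrite sub_capmx => /andP[/submxP[D ->] /sub_kermxP HK].
rewrite submx0; apply/eqP/trace_adj_eq0.
by rewrite hadjM mulmxA HK mul0mx mxtrace0.
Qed.

Lemma frob_ineq b (Z : 'M[C]_b) :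
  `|\tr Z| ^+ 2 <= (\rank Z)%:R * \tr (Z *m adj Z).
Proof.
have [r0|rpos] := posnP (\rank Z).
  move/eqP: (r0); rewrite mxrank_eq0 => /eqP ->.
  by rewrite mxrank0 mxtrace0 normr0 expr0n mul0r.
set r := \rank Z in rpos *.
pose Q := schmidt (row_base Z).
have HQ : Q *m adj Q = 1%:M.
  by rewrite -tstar_adj; apply/unitarymxP/schmidt_unitarymx/rank_leq_col.
have : (Z <= Q)%MS.
  apply: submx_trans (schmidt_sub _); by rewrite eq_row_base.
move=> /submxP [D HD].
pose P := adj Q *m Q.
have HZP : Z *m P = Z by rewrite HD /P mulmxA -(mulmxA D) HQ mulmx1.
have HPa : adj P = P by rewrite /P hadjM hadjK.
have HPZ : P *m adj Z = adj Z by rewrite -HPa -hadjM HZP.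
have HPP : P *m P = P by rewrite /P mulmxA -(mulmxA (adj Q)) HQ mulmx1.
have HtrP : \tr P = r%:R by rewrite /P mxtrace_mulC HQ mxtrace1.
set t := \tr Z.
pose c := t / r%:R.
have rn0 : (r%:R : C) != 0 by rewrite pnatr_eq0 -lt0n.
have cc : c^* = t^* / r%:R by rewrite /c rmorphM rmorphV ?unitfE // rmorph_nat.
have Hge := trace_adj_ge0 (Z - c *: P).
have key : \tr ((Z - c *: P) *m adj (Z - c *: P)) =
    \tr (Z *m adj Z) - t * t^* / r%:R.
  rewrite hadjB hadjZ HPa mulmxBl !mulmxBr -!scalemxAl -!scalemxAr.
  rewrite HZP HPZ HPP !raddfB /= !mxtraceZ HtrP htr_adj -/t cc /c.
  field; exact: rn0.
rewrite key subr_ge0 ler_pdivrMr ?ltr0n // in Hge.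
by rewrite normCK [X in _ <= X]mulrC.
Qed.

Lemma coef_ineq b (Z : 'M[C]_b) (k : nat) : (\rank Z <= k)%N ->
  (k%:R)^-1 * `|\tr Z| ^+ 2 <= \tr (Z *m adj Z).
Proof.
move=> Hk; have [->|kpos] := posnP k.
  by rewrite invr0 mul0r trace_adj_ge0.
rewrite ler_pdivrMl ?ltr0n //.
apply: le_trans (frob_ineq Z) _.
by apply: ler_wpM2r; [exact: trace_adj_ge0 | rewrite ler_nat].
Qed.

Lemma psd_fact p (A : 'M[C]_p) : psd A -> exists R : 'M[C]_p, A = R *m adj R.
Proof.
move=> [HA Hq].
have Hn : A \is normalmx by apply/normalmxP; rewrite tstar_adj HA.
have := orthomx_spectralP Hn.
set U := spectralmx A; set d := spectral_diag A.
have HU : U \is unitarymx by exact: spectral_unitarymx.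
rewrite invmx_unitary // tstar_adj => HAd.
have UU : U *m adj U = 1%:M by rewrite -tstar_adj; apply/unitarymxP.
have Hd i : 0 <= d 0 i.
  have := Hq (adj U *m delta_mx i 0).
  rewrite hadjM hadjK HAd !mulmxA -(mulmxA _ U) UU mulmx1.
  rewrite -(mulmxA _ U (adj U)) UU mulmx1.
  have -> : adj (delta_mx i 0 : 'cV[C]_p) = delta_mx 0 i.
    by apply/matrixP=> x y; rewrite hadjE !mxE rmorph_nat andbC.
  by rewrite -rowE row_diag_mx -scalemxAl mul_delta_mx !mxE !eqxx mulr1.
pose s := map_mx sqrtC d.
exists (adj U *m diag_mx s).
rewrite hadjM hadjK mulmxA -(mulmxA _ (diag_mx s)) HAd; congr (_ *m _ *m _).
apply/matrixP=> i j; rewrite mul_diag_mx mxE hadjE !mxE.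
have [->|nij] := eqVneq i j.
  rewrite !mulr1n.
  by rewrite geC0_conj ?sqrtC_ge0 ?Hd // -expr2 sqrtCK.
by rewrite !mulr0n rmorph0 mulr0.
Qed.

End Aux4.

Section Aux5.
Variable C : numClosedFieldType.

Lemma entryD p q (M N : 'M[C]_(p, q)) i j : (M + N) i j = M i j + N i j.
Proof. by rewrite mxE. Qed.

Lemma psdD p (A B : 'M[C]_p) : psd A -> psd B -> psd (A + B).
Proof.
move=> [HA qA] [HB qB]; split; first by rewrite hadjD HA HB.
by move=> x; rewrite mulmxDr mulmxDl entryD addr_ge0.
Qed.

Lemma psd0 p : psd (0 : 'M[C]_p).
Proof. by split; [rewrite hadj0 | move=> x; rewrite mulmx0 mul0mx mxE]. Qed.

Lemma psd_sum p k (F : 'I_k -> 'M[C]_p) : (forall i, psd (F i)) -> psd (\sum_i F i).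
Proof.
move=> H; elim/big_ind: _ => //; [exact: psd0 | exact: psdD].
Qed.

Lemma quad_rank1 p (x y : 'cV[C]_p) (c : C) :
  (adj y *m (c *: (x *m adj x)) *m y) 0 0 = c * `|(adj x *m y) 0 0| ^+ 2.
Proof.
rewrite -scalemxAr -scalemxAl mxE; congr (_ * _).
rewrite normCKC mulmxA -(mulmxA _ (adj x)) [in LHS]mxE big_ord1; congr (_ * _).
rewrite !mxE rmorph_sum; apply: eq_bigr => i _.
by rewrite !hadjE rmorphM /= conjCK mulrC.
Qed.

Lemma psd_rank1 p (x : 'cV[C]_p) (c : C) : 0 <= c -> psd (c *: (x *m adj x)).
Proof.
move=> c0; split.
  by rewrite hadjZ hadjM hadjK geC0_conj.
by move=> y; rewrite quad_rank1 mulr_ge0 ?exprn_ge0.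
Qed.

Lemma kron_adj p1 q1 p2 q2 (A : 'M[C]_(p1, q1)) (B : 'M[C]_(p2, q2)) :
  adj (kron A B) = kron (adj A) (adj B).
Proof.
apply/matrixP=> x y; case/mxvec_indexP: x => i1 i2; case/mxvec_indexP: y => j1 j2.
by rewrite hadjE !kronE !hadjE rmorphM.
Qed.

Lemma block_adj N k (Y : 'M[C]_(N * k)) i j : block (adj Y) i j = adj (block Y j i).
Proof. by apply/matrixP=> p q; rewrite mxE !hadjE mxE. Qed.

Lemma starY_herm m n N (Y : 'M[C]_(N * (m * n))) (P : 'M[C]_m) (Q : 'M[C]_n) :
  adj Y = Y -> adj P = P -> adj Q = Q -> adj (starY Y P Q) = starY Y P Q.
Proof.
move=> HY HP HQ; apply/matrixP=> i j; rewrite hadjE !mxE.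
by rewrite -htr_adj hadjM hadjK kron_adj HP HQ mxtrace_mulC -block_adj HY.
Qed.

Lemma block_sum N k K (F : 'I_K -> 'M[C]_(N * k)) i j :
  block (\sum_t F t) i j = \sum_t block (F t) i j.
Proof. by apply/matrixP=> p q; rewrite !mxE !summxE; apply: eq_bigr => t _; rewrite mxE. Qed.

Lemma starY_sum m n N K (F : 'I_K -> 'M[C]_(N * (m * n))) (P : 'M[C]_m) (Q : 'M[C]_n) :
  starY (\sum_t F t) P Q = \sum_t starY (F t) P Q.
Proof.
apply/matrixP=> i j; rewrite summxE mxE block_sum hadj_sum mulmx_sumr raddf_sum.
by apply: eq_bigr => t _; rewrite mxE.
Qed.

End Aux5.

Section Aux6.
Variable C : numClosedFieldType.

Lemma delta_sandwich k l p q (X : 'M[C]_(p, q)) (a : 'I_k) b c (d : 'I_l) :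
  delta_mx a b *m X *m delta_mx c d = X b c *: delta_mx a d.
Proof.
apply/matrixP=> x y; rewrite !mxE (bigD1 c) //= big1 ?addr0; last first.
  by move=> z nz; rewrite !mxE (negbTE nz) mulr0.
rewrite !mxE eqxx /= (bigD1 b) //= big1 ?addr0; last first.
  by move=> z nz; rewrite !mxE (negbTE nz) andbF mul0r.
rewrite !mxE eqxx andbT.
by case: (x == a); case: (y == d); rewrite /= ?mul1r ?mulr1 ?mul0r ?mulr0.
Qed.

Lemma entryB p q (M N : 'M[C]_(p, q)) i j : (M - N) i j = M i j - N i j.
Proof. by rewrite !mxE. Qed.

Lemma adj_delta p q (i : 'I_p) (j : 'I_q) : adj (delta_mx i j : 'M[C]_(p, q)) = delta_mx j i.
Proof. by apply/matrixP=> x y; rewrite hadjE !mxE rmorph_nat andbC. Qed.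

Lemma conj_delta p q (i : 'I_p) (j : 'I_q) : map_mx Num.conj (delta_mx i j : 'M[C]_(p, q)) = delta_mx i j.
Proof. by apply/matrixP=> x y; rewrite !mxE rmorph_nat. Qed.

Lemma tr_delta p (i : 'I_p) : \tr (delta_mx i i : 'M[C]_p) = 1.
Proof.
rewrite /mxtrace (bigD1 i) //= big1 ?addr0; first by rewrite mxE !eqxx.
by move=> j nj; rewrite mxE (negbTE nj).
Qed.

End Aux6.

Unset Implicit Arguments.

Theorem theoremA (C : numClosedFieldType) (m n N alpha : nat)
  (Y : 'M[C]_(N * (m * n))) :
  (0 < m)%N -> (0 < n)%N -> (0 < N)%N -> (0 < alpha)%N ->
  psd Y -> \rank Y = alpha ->
  (* (a) *)
  (forall (P : 'M[C]_m) (Q : 'M[C]_n), psd P -> psd Q -> psd (starY Y P Q)) /\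
  (* (b) and (c), for every rank-one psd decomposition of Y *)
  (forall (Yk : 'I_alpha -> 'M[C]_(N * (m * n)))
          (v : 'I_alpha -> 'I_N -> 'cV[C]_(m * n))
          (r : 'I_alpha -> nat),
     (forall k, psd (Yk k) /\ \rank (Yk k) = 1%N) ->
     Y = \sum_(k < alpha) Yk k ->
     (forall k i j, block (Yk k) i j = v k i *m adj (v k j)) ->
     (forall k, is_max_rank_span (fun i => vec_inv (v k i)) (r k)) ->
     (* (b) *)
     (forall (b : nat), (0 < b)%N ->
        forall (A : 'M[C]_(m, b)) (B : 'M[C]_(n, b)), A != 0 -> B != 0 ->
          loewner_ge (starY Y (A *m adj A) (B *m adj B))
            (\sum_(k < alpha) coef A B (r k) *: (rho (v k) A B *m adj (rho (v k) A B)))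
          /\ psd (\sum_(k < alpha) coef A B (r k) *: (rho (v k) A B *m adj (rho (v k) A B)))
          /\ (forall k, loewner_ge (starY (Yk k) (A *m adj A) (B *m adj B))
                          (coef A B (r k) *: (rho (v k) A B *m adj (rho (v k) A B))))) /\
     (* (c) *)
     (forall (k : 'I_alpha) (b : nat), (0 < b)%N ->
        exists (A : 'M[C]_(m, b)) (B : 'M[C]_(n, b)) (u : 'cV[C]_N),
          [/\ A != 0, B != 0, (adj (rho (v k) A B) *m u) 0 0 != 0 &
              (adj u *m starY (Yk k) (A *m adj A) (B *m adj B) *m u) 0 0
                = coef A B (r k) * `|(adj (rho (v k) A B) *m u) 0 0| ^+ 2])).
Proof.
move=> m0 n0 N0 a0 HY rkY; split.
  move=> P Q HP HQ.
  have [R HR] := psd_fact HY; have [F HF] := psd_fact HP; have [G HG] := psd_fact HQ.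
  split; first by apply: starY_herm; [exact: HY.1 | exact: HP.1 | exact: HQ.1].
  move=> u.
  pose L := fun (t : 'I_(N * (m * n))) (i : 'I_N) =>
    (\col_p R (mxvec_index i p) t : 'cV[C]_(m * n)).
  have HL i j : block Y i j = \sum_t L t i *m adj (L t j).
    apply/matrixP=> p q; rewrite mxE HR mxE summxE; apply: eq_bigr => t _.
    by rewrite [RHS]mxE big_ord1 hadjE !mxE.
  rewrite (starY_quad P Q u HL) HF HG.
  by apply: sumr_ge0 => t _; rewrite quadK trace_adj_ge0.
move=> Yk v r HYk HYsum Hblk Hr.
have HL k i j : block (Yk k) i j = \sum_(t < 1) (fun _ => v k) t i *m adj ((fun _ => v k) t j).
  by rewrite big_ord1 Hblk.
have HQk k b (A : 'M[C]_(m, b)) (B : 'M[C]_(n, b)) (u : 'cV[C]_N) :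
    (adj u *m starY (Yk k) (A *m adj A) (B *m adj B) *m u) 0 0 =
    \tr ((adj B *m vec_inv (\sum_j u j 0 *: v k j) *m map_mx Num.conj A) *m
          adj (adj B *m vec_inv (\sum_j u j 0 *: v k j) *m map_mx Num.conj A)).
  by rewrite (starY_quad _ _ u (HL k)) big_ord1 quadK.
have Hherm k b (A : 'M[C]_(m, b)) (B : 'M[C]_(n, b)) :
    adj (starY (Yk k) (A *m adj A) (B *m adj B)) = starY (Yk k) (A *m adj A) (B *m adj B).
  by apply: starY_herm; [exact: (HYk k).1.1 | rewrite hadjM hadjK | rewrite hadjM hadjK].
split.
  move=> b b0 A B A0 B0.
  have Hc k : 0 <= coef A B (r k) by rewrite /coef invr_ge0 ler0n.
  have Hk k : loewner_ge (starY (Yk k) (A *m adj A) (B *m adj B))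
                 (coef A B (r k) *: (rho (v k) A B *m adj (rho (v k) A B))).
    split.
      rewrite hadjB hadjZ hadjM hadjK Hherm; congr (_ - _ *: _).
      by rewrite /coef fmorphV rmorph_nat.
    move=> u; rewrite mulmxBr mulmxBl entryB quad_rank1 HQk rho_dot subr_ge0.
    apply: coef_ineq; rewrite !rank_adj !leq_min; apply/and3P; split.
    - rewrite (leq_trans (mxrankM_maxr _ _)) //.
      by rewrite mxrank_map.
    - rewrite (leq_trans (mxrankM_maxl _ _)) // (leq_trans (mxrankM_maxl _ _)) //.
      by rewrite /adj mxrank_tr mxrank_map.
    - rewrite (leq_trans (mxrankM_maxl _ _)) // (leq_trans (mxrankM_maxr _ _)) //.
      by rewrite vec_inv_sum; apply: (Hr k).2.
  split.
    rewrite /loewner_ge HYsum starY_sum -sumrB; apply: psd_sum => k; exact: Hk.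
  split; last exact: Hk.
  by apply: psd_sum => k; apply: psd_rank1.
move=> k b b0.
have : Yk k != 0 by rewrite -mxrank_eq0 (HYk k).2.
case/matrix0Pn => x [y]; case/mxvec_indexP: x => i p; case/mxvec_indexP: y => j q Hxy.
have vi0 : v k i != 0.
  apply: contraNneq Hxy => Hv.
  have E := congr1 (fun M : 'M[C]_(m * n) => M p q) (Hblk k i j); rewrite /= mxE in E.
  by rewrite E Hv mul0mx mxE.
set W := vec_inv (v k i).
have W0 : W != 0.
  by apply: contraNneq vi0 => HW; apply/eqP; rewrite -(@vec_invK C n m (v k i)) -/W HW; rewrite /vec !trmx0 linear0 trmx0.
case/matrix0Pn: W0 => q' [p'] HW.
pose l0 := Ordinal b0.
exists (delta_mx p' l0), (delta_mx q' l0), (delta_mx i 0).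
have Hw : \sum_j (delta_mx i 0 : 'cV[C]_N) j 0 *: v k j = v k i.
  rewrite (bigD1 i) //= big1 ?addr0; first by rewrite mxE !eqxx scale1r.
  by move=> z nz; rewrite mxE (negbTE nz) scale0r.
have HZ : adj (delta_mx q' l0 : 'M[C]_(n, b)) *m W *m map_mx Num.conj (delta_mx p' l0 : 'M[C]_(m, b))
          = W q' p' *: delta_mx l0 l0.
  by rewrite adj_delta conj_delta delta_sandwich.
have Hr1 : (0 < r k)%N.
  have := (Hr k).2 (fun j => (j == i)%:R).
  rewrite (bigD1 i) //= big1 ?addr0; last by move=> z nz; rewrite (negbTE nz) scale0r.
  rewrite eqxx scale1r -/W => /(leq_trans _); apply.
  by rewrite lt0n mxrank_eq0; apply/eqP => W0; move: HW; rewrite W0 mxE eqxx.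
have Hcoef : coef (delta_mx p' l0 : 'M[C]_(m, b)) (delta_mx q' l0 : 'M[C]_(n, b)) (r k) = 1.
  rewrite /coef !rank_adj !mxrank_delta.
  by rewrite (minn_idPl Hr1) minnn invr1.
rewrite HQk rho_dot Hw -/W HZ Hcoef mul1r mxtraceZ tr_delta mulr1.
split.
- by rewrite -mxrank_eq0 mxrank_delta.
- by rewrite -mxrank_eq0 mxrank_delta.
- exact: HW.
rewrite hadjZ -scalemxAl -scalemxAr scalerA adj_delta mul_delta_mx mxtraceZ tr_delta mulr1.
by rewrite normCK.
Qed.
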